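(* Let $U$ be a regular region, let $\phi_h\in\Lambda^k_h$ be a solution of the localized discrete Euler--Lagrange equations on $U$, i.e. $dS_U[\phi_h]\cdot v=0$ for all admissible variations $v$ with respect to $U$, and let $V,W\in\mathfrak{X}(\Lambda^k_h)$ be first variations at $\phi_h$. Then $$d\Theta^h_U(\phi_h)\cdot(V,W)=0,$$ where $d$ is the exterior derivative on the finite-dimensional vector space $\Lambda^k_h$.
   Context: $X$ is a bounded $(n+1)$-dimensional polyhedral domain with a metric and finite element triangulation $\mathcal{T}_h$; $H\Lambda^m(X)$: square-integrable $m$-forms with square-integrable exterior derivative. A Lagrangian density $\mathcal{L}$ assigns to $(x,\phi,\psi)$, $\phi\in H\Lambda^k,\psi\in dH\Lambda^k$, an $(n+1)$-form; $j^1\phi=(x,\phi,d\phi)$; $S_U[\phi]=\int_U\mathcal{L}(j^1\phi)$. $\Lambda^k_h\subset H\Lambda^k$ is a finite element space (part of a subcomplex with cochain projections $\pi_h d=d\pi_h$) with a basis of locally supported shape functions associated to mesh nodes; $\mathring{\Lambda}^k_h$: elements with vanishing trace on $\partial X$. A node $i$ is interior to a region $U$ if $U$ contains all simplices touching $i$; $U$ is regular if it equals the union of all simplices touching its interior nodes; admissible variations w.r.t. regular $U$ are $v\in\mathring{\Lambda}^k_h$ with $v|_U$ having vanishing trace on $\partial U$. For $v\in\Lambda^k_h$ restricted to $U$, $v_\partial$ is the part of its expansion in the shape functions having nonzero trace on $\partial U$ and $v_{in}=v-v_\partial$. Vector fields $V\in\mathfrak{X}(\Lambda^k_h)$ are identified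 with maps $\Lambda^k_h\to\Lambda^k_h$, and $V_\partial(\phi):=(V(\phi))_\partial$. The discrete Cartan one-form on $\Lambda^k_h$ is $\Theta^h_U(\phi)\cdot V:=dS_U[\phi]\cdot V_\partial$. A first variation at $\phi_h$ is a vector field $B$ on $\Lambda^k_h$ whose flow preserves the discrete Euler--Lagrange equations, i.e. $d\big(dS_U[\cdot]\cdot A\big)(\phi_h)\cdot B=0$ for every vector field $A$ on $\Lambda^k_h$ taking values in the admissible variations with respect to $U$. *)

(* Defs.v *)
(* Abstract finite-dimensional model of the discrete (finite element) setting:
   Lambda^k_h is identified, through its basis of shape functions indexed by
   the N nodes, with the coordinate space 'rV[R]_N. *)
From HB Require Import structures.
From mathcomp Require Import all_boot all_order all_algebra.
From mathcomp Require Import all_classical all_reals all_analysis.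
Set Implicit Arguments.
Unset Strict Implicit.
Unset Printing Implicit Defensive.
Import Order.TTheory GRing.Theory Num.Theory.
Import numFieldNormedType.Exports.
Local Open Scope ring_scope.
Local Open Scope classical_set_scope.

Section FEdefs.
Variables (R : realType) (N : nat).
Notation E := 'rV[R]_N.

Definition dS (S : E -> R) (phi v : E) : R := 'D_v S phi.

(* v_partial : the part of the expansion of v in the shape functions whose
   index lies in [bnd], the set of shape functions with nonzero trace on dU. *)
Definition bdry_part (bnd : {set 'I_N}) (v : E) : E :=
  \row_j (if j \in bnd then v ord0 j else 0).

Definition in_part (bnd : {set 'I_N}) (v : E) : E := v - bdry_part bnd v.

Definition cartan (S : E -> R) (bnd : {set 'I_N}) (phi v : E) : R :=
  dS S phi (bdry_part bnd v).

(* exterior derivative of a one-form alpha on the vector space E, evaluated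
   on two tangent vectors v w at phi (constant-coefficient formula) *)
Definition ext_deriv1 (alpha : E -> E -> R) (phi v w : E) : R :=
  'D_v (fun psi => alpha psi w) phi - 'D_w (fun psi => alpha psi v) phi.

Definition C2 (S : E -> R) : Prop :=
  [/\ (forall x, differentiable S x),
      (forall v x, differentiable (fun y => 'D_v S y) x) &
      (forall v w, continuous (fun y => 'D_w (fun z => 'D_v S z) y))].

Definition lin_subspace (adm : E -> Prop) : Prop :=
  adm 0 /\ forall (a : R) (u v : E), adm u -> adm v -> adm (a *: u + v).

(* locality of S_U: any v with vanishing boundary part (v = v_in) agrees on U
   with an admissible variation a, and S_U does not see v - a. *)
Definition local_action (S : E -> R) (bnd : {set 'I_N}) (adm : E -> Prop) :=
  forall v : E, bdry_part bnd v = 0 ->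
    exists2 a : E, adm a & forall (psi : E) (t : R), S (psi + t *: (v - a)) = S psi.

Definition discrete_EL (S : E -> R) (adm : E -> Prop) (phi : E) : Prop :=
  forall v, adm v -> dS S phi v = 0.

Definition first_variation (S : E -> R) (adm : E -> Prop) (phi : E)
  (B : E -> E) : Prop :=
  forall A : E -> E, (forall x, differentiable A x) -> (forall x, adm (A x)) ->
    'D_(B phi) (fun psi => dS S psi (A psi)) phi = 0.

End FEdefs.

(* Main.v *)
Require Import Defs.
From HB Require Import structures.
From mathcomp Require Import all_boot all_order all_algebra.
From mathcomp Require Import all_classical all_reals all_analysis.
From mathcomp Require Import ring lra.
Import Order.TTheory GRing.Theory Num.Theory.
Import numFieldNormedType.Exports.
Local Open Scope ring_scope.
Local Open Scope classical_set_scope.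

Section H.
Variables (R : realType) (N : nat).
Notation E := 'rV[R]_N.

Lemma line_quot (F : E -> R) (x w : E) (t0 : R) :
  (fun h : R => h^-1 *: (((fun t : R => F (x + t *: w)) \o shift t0) (h *: 1) - F (x + t0 *: w)))
  = (fun h : R => h^-1 *: ((F \o shift (x + t0 *: w)) (h *: w) - F (x + t0 *: w))).
Proof.
apply/funext => h /=. congr (_ *: (F _ - _)).
by rewrite [h *: 1]mulr1 scalerDl addrCA addrC.
Qed.

Lemma line_derivE (F : E -> R) (x w : E) (t0 : R) :
  'D_1 (fun t : R => F (x + t *: w)) t0 = 'D_w F (x + t0 *: w).
Proof. by rewrite /derive line_quot. Qed.

Lemma line_derivable (F : E -> R) (x w : E) (t0 : R) :
  derivable F (x + t0 *: w) w -> derivable (fun t : R => F (x + t *: w)) t0 1.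
Proof. by rewrite /derivable line_quot. Qed.

Lemma line_mvt (F : E -> R) (x w : E) (h : R) : 0 < h ->
  (forall y, derivable F y w) ->
  exists2 t, 0 < t < h & F (x + h *: w) - F x = h * 'D_w F (x + t *: w).
Proof.
move=> h0 dF.
have D1 : forall t, t \in `]0, h[%R -> is_derive t 1 (fun t : R => F (x + t *: w)) ('D_w F (x + t *: w)).
  move=> t _; apply: DeriveDef; first exact: line_derivable.
  exact: line_derivE.
have C1 : {within `[0, h], continuous (fun t : R => F (x + t *: w))}.
  apply: continuous_subspaceT => t.
  apply: differentiable_continuous; apply/derivable1_diffP.
  exact: line_derivable.
have [c cin E1] := MVT h0 D1 C1.
exists c; first by move: cin; rewrite in_itv.
by move: E1; rewrite scale0r addr0 subr0 mulrC.
Qed.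


Lemma shift_quot (F : E -> R) (c y u : E) :
  (fun h : R => h^-1 *: (((fun z => F (z + c)) \o shift y) (h *: u) - F (y + c)))
  = (fun h : R => h^-1 *: ((F \o shift (y + c)) (h *: u) - F (y + c))).
Proof. by apply/funext => h /=; rewrite addrA. Qed.

Lemma shift_derivE (F : E -> R) (c y u : E) :
  'D_u (fun z => F (z + c)) y = 'D_u F (y + c).
Proof. by rewrite /derive shift_quot. Qed.

Lemma shift_derivable (F : E -> R) (c y u : E) :
  derivable F (y + c) u -> derivable (fun z => F (z + c)) y u.
Proof. by rewrite /derivable shift_quot. Qed.

Lemma delta_rep (S : E -> R) (v w x : E) (h : R) : 0 < h ->
  (forall y u, derivable S y u) ->
  (forall y, derivable (fun z => 'D_v S z) y w) ->
  exists2 p, `|p - x| <= h * (`|v| + `|w|) &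
    S (x + h *: v + h *: w) - S (x + h *: v) - S (x + h *: w) + S x
    = h * (h * 'D_w (fun z => 'D_v S z) p).
Proof.
move=> h0 dS dDv.
set G := (fun y => S (y + h *: w)) - S.
have dG : forall y, derivable G y v.
  by move=> y; apply: derivableB => //; apply: shift_derivable.
have [s /andP[s0 sh] E1] := @line_mvt G x v h h0 dG.
have DG : 'D_v G (x + s *: v) = 'D_v S (x + s *: v + h *: w) - 'D_v S (x + s *: v).
  by rewrite deriveB //; [rewrite shift_derivE | apply: shift_derivable].
have [t /andP[t0 th] E2] := @line_mvt _ (x + s *: v) w h h0 dDv.
exists (x + s *: v + t *: w).
  have -> : x + s *: v + t *: w - x = s *: v + t *: w by rewrite addrAC [x + _]addrC addrK.

  apply: (le_trans (ler_normD _ _)).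
  rewrite !normrZ mulrDr lerD // ler_wpM2r // ger0_norm ?ltW //.
have GE : forall y, G y = S (y + h *: w) - S y by [].
rewrite -E2 -DG -E1 !GE.
by ring.
Qed.

Lemma tri (a b c : R) : `|a - b| <= `|a - c| + `|b - c|.
Proof.
have -> : a - b = (a - c) + (c - b) by rewrite addrA subrK.
by rewrite (le_trans (ler_normD _ _)) // [`|c - b|]distrC.
Qed.

Lemma schwarz (S : E -> R) (v w x : E) :
  (forall y u, derivable S y u) ->
  (forall u u' y, derivable (fun z => 'D_u S z) y u') ->
  (forall u u', continuous (fun y => 'D_u' (fun z => 'D_u S z) y)) ->
  'D_v (fun y => 'D_w S y) x = 'D_w (fun y => 'D_v S y) x.
Proof.
move=> dS dD C.
set g1 := (fun y => 'D_w (fun z => 'D_v S z) y).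
set g2 := (fun y => 'D_v (fun z => 'D_w S z) y).
have key : forall h, 0 < h -> exists p, exists q,
    [/\ `|p - x| <= h * (`|v| + `|w|), `|q - x| <= h * (`|v| + `|w|) & g1 p = g2 q].
  move=> h h0.
  have [p Hp Ep] := @delta_rep S v w x h h0 dS (dD v w).
  have [q Hq Eq] := @delta_rep S w v x h h0 dS (dD w v).
  exists p, q; split; [exact: Hp | by rewrite [`|v| + _]addrC | ].
  have hn : h != 0 by rewrite gt_eqF.
  apply: (mulfI hn); apply: (mulfI hn).
  rewrite /g1 /g2; apply: (etrans (esym Ep)); apply: (etrans _ Eq).
  rewrite [x + h *: w + h *: v]addrAC; congr (_ + _); exact: addrAC.
change (g2 x = g1 x).
apply/eqP; rewrite -subr_eq0 -normr_eq0; apply: contraT => ne.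
have d0 : 0 < `|g2 x - g1 x| by rewrite lt0r ne normr_ge0.
set d := `|g2 x - g1 x| in d0 *.
have e0 : 0 < d / 4 by rewrite divr_gt0.
suff : d < d by rewrite ltxx.
have := C v w x; move/cvgrPdist_lt/(_ _ e0)/nbhs_normP => [d1 d1p H1].
have := C w v x; move/cvgrPdist_lt/(_ _ e0)/nbhs_normP => [d2 d2p H2].
set M := `|v| + `|w| + 1.
have M0 : 0 < M by rewrite /M ltr_pwDr // addr_ge0.
set h := Num.min d1 d2 / M.
have h0 : 0 < h by rewrite divr_gt0 // lt_min d1p d2p.
have hM : h * (`|v| + `|w|) < Num.min d1 d2.
  have -> : Num.min d1 d2 = h * M by rewrite /h divfK // gt_eqF.
  by rewrite ltr_pM2l // /M ltrDl.
have [p [q [Hp Hq E1]]] := key h h0.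
have P1 : `|g1 x - g1 p| < d / 4.
  apply: H1; rewrite /ball_ /= distrC.
  apply: (le_lt_trans Hp); apply: (lt_le_trans hM); by rewrite ge_min lexx.
have P2 : `|g2 x - g2 q| < d / 4.
  apply: H2; rewrite /ball_ /= distrC.
  apply: (le_lt_trans Hq); apply: (lt_le_trans hM); by rewrite ge_min lexx orbT.
have T := tri (g2 x) (g1 x) (g1 p).
clearbody g1 g2.
rewrite {1}E1 -/d in T.
lra.
Qed.

Lemma D_zero (S : E -> R) (psi u : E) :
  (forall t : R, S (psi + t *: u) = S psi) -> 'D_u S psi = 0.
Proof.
move=> H; rewrite -(derive_cst (S psi) psi u) /derive.
suff -> : (fun h : R => h^-1 *: ((S \o shift psi) (h *: u) - S psi)) = (fun h : R => h^-1 *: ((cst (S psi) \o shift psi) (h *: u) - cst (S psi) psi)) by [].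
by apply/funext => h /=; rewrite [h *: u + psi]addrC H.
Qed.

Lemma bdry_in (bnd : {set 'I_N}) (w : E) : bdry_part bnd (in_part bnd w) = 0.
Proof.
apply/rowP => j; rewrite /in_part /bdry_part !mxE.
by case: ifP => // ->; rewrite subrr.
Qed.

Lemma cartan_decomp (S : E -> R) (bnd : {set 'I_N}) (adm : E -> Prop) (w : E) :
  (forall x, differentiable S x) -> local_action S bnd adm ->
  exists2 a, adm a & forall psi, cartan S bnd psi w = 'D_w S psi - 'D_a S psi.
Proof.
move=> dSx loc.
have [a adma Ha] := loc _ (bdry_in bnd w).
exists a => // psi.
have Z := @D_zero S psi (in_part bnd w - a) (Ha psi).
rewrite /cartan /dS.
have -> : bdry_part bnd w = w - (in_part bnd w - a) - a.
  by rewrite /in_part opprB addrA addrAC addrK opprB addrC subrK.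
move: Z; set c := in_part bnd w - a => Z.
clearbody c; rewrite deriveE // !linearB /= -!deriveE // Z subr0 //.
Qed.
End H.

Lemma fin_alg (R : realType) (a b c d : R) : a = c -> b = 0 -> d = 0 -> a - b - (c - d) = 0.
Proof. by move=> -> -> ->; rewrite !subr0 subrr. Qed.

Theorem mainTheorem3 (R : realType) (N : nat) (S : 'rV[R]_N -> R)
  (bnd : {set 'I_N}) (adm : 'rV[R]_N -> Prop) (phi_h : 'rV[R]_N)
  (V W : 'rV[R]_N -> 'rV[R]_N) :
  C2 S -> lin_subspace adm -> local_action S bnd adm ->
  discrete_EL S adm phi_h ->
  first_variation S adm phi_h V -> first_variation S adm phi_h W ->
  ext_deriv1 (cartan S bnd) phi_h (V phi_h) (W phi_h) = 0.
Proof.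
move=> [dS dDS cont] _ loc _ fV fW.
have dS' : forall y u, derivable S y u by move=> y u; exact: diff_derivable.
have dD' : forall u u' y, derivable (fun z => 'D_u S z) y u'.
  by move=> u u' y; exact: diff_derivable.
set v := V phi_h; set w := W phi_h.
have [aw aw_adm Ew] := @cartan_decomp R N S bnd adm w dS loc.
have [av av_adm Ev] := @cartan_decomp R N S bnd adm v dS loc.
rewrite /ext_deriv1.
have F1 : (cartan S bnd)^~ w = ('D_w S) - ('D_aw S).
  by apply/funext => psi; rewrite Ew.
have F2 : (cartan S bnd)^~ v = ('D_v S) - ('D_av S).
  by apply/funext => psi; rewrite Ev.
rewrite F1 F2 (deriveB (dD' _ _ _) (dD' _ _ _)) (deriveB (dD' _ _ _) (dD' _ _ _)).
have Z1 := fV (fun _ => aw) (fun x => differentiable_cst aw x) (fun _ => aw_adm).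
have Z2 := fW (fun _ => av) (fun x => differentiable_cst av x) (fun _ => av_adm).
rewrite /Defs.dS -/v -/w in Z1 Z2.
have Sch := @schwarz R N S v w phi_h dS' dD' cont.
rewrite [X in _ - X - _]Z1 [X in _ - (_ - X)]Z2 [X in X - _ - _]Sch.
by rewrite !subr0 subrr.
Qed.
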